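(* Consider the coded cooperative data exchange (CCDE) setting described in the context, with user set $V$, minimum sum-rate $R_{\mathrm{CO}}$, fundamental partition $\mathcal{P}^*$ (which has $|\mathcal{P}^*|\ge 2$), core $\mathscr{R}^*_{\mathrm{CO}}(V)$, and $K=|\mathcal{P}^*|-1$. Let $w_V\in\mathbb{R}_{>0}^{|V|}$ and $g(r_V)=\sum_{i\in V} r_i^2/w_i$. Let $\mathbb{Q}_K=\{z/K: z\in\mathbb{Z}\}$. Then a vector $r^*_V\in\mathscr{R}^*_{\mathrm{CO}}(V)\cap\mathbb{Q}_K^{|V|}$ is a minimizer of $$\min\{g(r_V): r_V\in\mathscr{R}^*_{\mathrm{CO}}(V)\cap\mathbb{Q}_K^{|V|}\}$$ if and only if, for all $i,j\in V$ and all positive integers $\zeta$ such that $r^*_V+\frac{\zeta}{K}(\chi_i-\chi_j)\in\mathscr{R}^*_{\mathrm{CO}}(V)$, we have $g(r^*_V)\le g\big(r^*_V+\frac{\zeta}{K}(\chi_i-\chi_j)\big)$.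
   Context: CCDE setting: there is a finite collection of independent packets, each uniformly distributed over a finite field; each user $i\in V$ ($|V|>1$) observes $Z_i$, a subset of the packets, and entropy is measured in packets, so that for $X\subseteq V$, $H(X)$ (the entropy of $Z_X=(Z_i:i\in X)$) is the number of distinct packets observed by users in $X$; in particular $H$ is integer-valued. Write $r(X)=\sum_{i\in X}r_i$ for $r_V\in\mathbb{R}^{|V|}$, and $H(X\mid Y)=H(X\cup Y)-H(Y)$. The achievable region is $\mathscr{R}(V)=\{r_V: r(X)\ge H(X\mid V\setminus X)\ \forall X\subsetneq V\}$, $R_{\mathrm{CO}}=\min\{r(V): r_V\in\mathscr{R}(V)\}$, and the core is $\mathscr{R}^*_{\mathrm{CO}}(V)=\{r_V\in\mathscr{R}(V): r(V)=R_{\mathrm{CO}}\}$. For $\alpha\in\mathbb{R}$, $f_\alpha(\emptyset)=0$ and $f_\alpha(X)=\alpha-H(V\setminus X\mid X)$ for $X\ne\emptyset$; the fundamental partition $\mathcal{P}^*$ is the finest partition of $V$ minimizing $\sum_{C\in\mathcal{P}}f_{R_{\mathrm{CO}}}(C)$ over all partitions $\mathcal{P}$ of $V$. $\chi_i\in\{0,1\}^{|V|}$ denotes the characteristic vector of $\{i\}$. *)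

(* Defs.v *)
From HB Require Import structures.
From mathcomp Require Import all_boot all_order all_algebra.
From mathcomp Require Import boolp classical_sets reals.
Set Implicit Arguments. Unset Strict Implicit. Unset Printing Implicit Defensive.
Import Order.TTheory GRing.Theory Num.Theory.
Local Open Scope ring_scope.

Section CCDE.
Variables (R : realType) (V Pk : finType) (Z : V -> {set Pk}).

(* H(X) = number of distinct packets observed by the users in X *)
Definition Hent (X : {set V}) : R := (#|\bigcup_(i in X) Z i|)%:R.

Definition Hcond (X Y : {set V}) : R := Hent (X :|: Y) - Hent Y.

Definition rsum (r : V -> R) (X : {set V}) : R := \sum_(i in X) r i.

Definition achievable (r : V -> R) : Prop :=
  forall X : {set V}, X \proper [set: V] -> Hcond X (~: X) <= rsum r X.

Definition RCO : R := inf [set rsum r [set: V] | r in achievable].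

Definition core (r : V -> R) : Prop := achievable r /\ rsum r [set: V] = RCO.

Definition fal (a : R) (X : {set V}) : R :=
  if X == finset.set0 then 0 else a - Hcond (~: X) X.

Definition psum (a : R) (Q : {set {set V}}) : R := \sum_(C in Q) fal a C.

Definition fundamental_partition (Ps : {set {set V}}) : Prop :=
  [/\ finset.partition Ps [set: V],
      forall Q, finset.partition Q [set: V] -> psum RCO Ps <= psum RCO Q
    & forall Q, finset.partition Q [set: V] -> psum RCO Q = psum RCO Ps ->
        forall C, C \in Ps -> exists2 D, D \in Q & C \subset D].

End CCDE.

Definition inQK (R : realType) (K : nat) (x : R) : Prop :=
  exists z : int, x = z%:~R / K%:R.

Definition gfun (R : realType) (V : finType) (w : V -> R) (r : V -> R) : R :=
  \sum_(i : V) r i ^+ 2 / w i.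

Definition shift (R : realType) (V : finType) (r : V -> R) (K zeta : nat) (i j : V) : V -> R :=
  fun k => r k + zeta%:R / K%:R * ((k == i)%:R - (k == j)%:R).

Arguments core {R V Pk} Z r.
Arguments fundamental_partition {R V Pk} Z Ps.
Arguments RCO {R V Pk} Z.
Arguments achievable {R V Pk} Z r.

(* Main.v *)
Require Import Defs.
From HB Require Import structures.
From mathcomp Require Import all_boot all_order all_algebra.
From mathcomp Require Import boolp classical_sets reals.
From mathcomp Require Import ring lra zify.
From mathcomp Require Import ssrbool eqtype ssrnat seq fintype finset bigop.
Import Order.TTheory GRing.Theory Num.Theory.
Local Open Scope ring_scope.
Set Implicit Arguments. Unset Strict Implicit. Unset Printing Implicit Defensive.
Section QK.
Variables (R : realType) (K : nat).
Hypothesis Kpos : (0 < K)%N.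

Lemma K_neq0 : (K%:R : R) != 0.
Proof. by rewrite pnatr_eq0 -lt0n. Qed.
Lemma K_gt0 : (0 : R) < K%:R.
Proof. by rewrite ltr0n. Qed.

Lemma QKD (a b : R) : inQK K a -> inQK K b -> inQK K (a + b).
Proof. move=> [z1 ->] [z2 ->]; exists (z1 + z2); by rewrite rmorphD /= mulrDl. Qed.
Lemma QKN (a : R) : inQK K a -> inQK K (- a).
Proof. move=> [z1 ->]; exists (- z1); by rewrite rmorphN /= mulNr. Qed.
Lemma QKB (a b : R) : inQK K a -> inQK K b -> inQK K (a - b).
Proof. by move=> ha hb; apply: QKD => //; apply: QKN. Qed.
Lemma QK0 : inQK K (0 : R).
Proof. exists 0; by rewrite mul0r. Qed.
Lemma QKn (n : nat) : inQK K (n%:R : R).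
Proof.
exists (n * K)%N%:Z; rewrite -pmulrn natrM mulfK //; exact: K_neq0.
Qed.
Lemma QKsum (I : finType) (P : pred I) (f : I -> R) :
  (forall k, P k -> inQK K (f k)) -> inQK K (\sum_(k | P k) f k).
Proof. move=> h; apply: (big_ind (inQK K)) => //; [exact: QK0 | exact: QKD]. Qed.
Lemma QKlb (q : R) : inQK K q -> 0 < q -> 1 / K%:R <= q.
Proof.
move=> [z ->] hq.
have hz : (0 : R) < z%:~R.
  by move: hq; rewrite pmulr_lgt0 // invr_gt0 K_gt0.
rewrite ler_pM2r ?invr_gt0 ?K_gt0 // ler1z.
by move: hz; rewrite ltr0z.
Qed.
Lemma QKlin (n : nat) (b1 b2 : bool) :
  inQK K (n%:R / K%:R * (b1%:R - b2%:R) : R).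
Proof.
exists (n%:Z * (b1%:Z - b2%:Z)).
by rewrite rmorphM rmorphB /= -!pmulrn [RHS]mulrAC.
Qed.
End QK.
Section Sets.
Variables (R : realType) (V Pk : finType) (Z : V -> {set Pk}).

Lemma rsumE (r : V -> R) (A : {set V}) : rsum r A = \sum_k (k \in A)%:R * r k.
Proof.
rewrite /rsum big_mkcond /=; apply: eq_bigr => k _.
by case: (k \in A); rewrite ?mul1r ?mul0r.
Qed.

Lemma rsum_mod (r : V -> R) (A B : {set V}) :
  rsum r (A :|: B) + rsum r (A :&: B) = rsum r A + rsum r B.
Proof.
rewrite !rsumE -!big_split /=; apply: eq_bigr => k _; rewrite !inE.
by case: (k \in A); case: (k \in B); rewrite /= ?mul1r ?mul0r ?addr0 ?add0r.
Qed.

Lemma rsum0 (r : V -> R) : rsum r finset.set0 = 0.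
Proof. by rewrite /rsum big_pred0 // => k; rewrite inE. Qed.

Lemma rsumC (r : V -> R) (A : {set V}) :
  rsum r (~: A) = rsum r [set: V] - rsum r A.
Proof.
apply/eqP; rewrite eq_sym subr_eq; apply/eqP.
rewrite !rsumE -!big_split /=; apply: eq_bigr => k _; rewrite !inE.
by case: (k \in A); rewrite /= ?mul1r ?mul0r ?addr0 ?add0r.
Qed.

Lemma rsum_D (r : V -> R) (A B : {set V}) :
  rsum r A = rsum r (A :\: B) + rsum r (A :&: B).
Proof.
rewrite !rsumE -!big_split /=; apply: eq_bigr => k _; rewrite !inE.
by case: (k \in A); case: (k \in B); rewrite /= ?mul1r ?mul0r ?addr0 ?add0r.
Qed.

Lemma Hent_sub (A B : {set V}) :
  Hent R Z (A :|: B) + Hent R Z (A :&: B) <= Hent R Z A + Hent R Z B.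
Proof.
rewrite /Hent -!natrD ler_nat.
set UA := \bigcup_(i in A) Z i; set UB := \bigcup_(i in B) Z i.
have -> : \bigcup_(i in A :|: B) Z i = UA :|: UB.
  apply/setP => p; rewrite inE; apply/bigcupP/orP.
    by move=> [k]; rewrite inE => /orP [] hk hp; [left|right]; apply/bigcupP; exists k.
  by move=> [] /bigcupP [k hk hp]; exists k => //; rewrite inE hk ?orbT.
rewrite -(cardsUI UA UB); apply: leq_add; first exact: leqnn. apply: subset_leq_card; apply/subsetP => p /bigcupP [k].
by rewrite !inE => /andP [ha hb] hp; apply/andP; split; apply/bigcupP; exists k.
Qed.

Lemma Hent0 : Hent R Z finset.set0 = 0.
Proof. by rewrite /Hent big_pred0 ?cards0 // => k; rewrite inE. Qed.

Definition F (Y : {set V}) : R := RCO Z - Hent R Z [set: V] + Hent R Z Y.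

Lemma F_sub (A B : {set V}) : F (A :|: B) + F (A :&: B) <= F A + F B.
Proof. rewrite /F; have := Hent_sub A B; lra. Qed.

Definition feas (r : V -> R) : Prop :=
  rsum r [set: V] = RCO Z /\ forall Y, Y != finset.set0 -> rsum r Y <= F Y.

Lemma core_feas (r : V -> R) : core Z r <-> feas r.
Proof.
split.
  move=> [ha hs]; split => // Y hY.
  have hp : ~: Y \proper [set: V].
    rewrite properT; apply: contra hY => /eqP h.
    by rewrite -(setCK Y) h finset.setCT.
  have := ha _ hp; rewrite /Hcond setCK (setUC (~: Y) Y) finset.setUCr rsumC hs /F; lra.
move=> [hs hf]; split => // X hX.
have hY : ~: X != finset.set0.
  apply: contraTneq hX => h; rewrite -(setCK X) h setC0 properT eqxx //.
have := hf _ hY; rewrite /Hcond finset.setUCr rsumC hs /F; lra.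
Qed.
End Sets.

Section Tight.
Variables (R : realType) (V Pk : finType) (Z : V -> {set Pk}) (K : nat).
Hypothesis Kpos : (0 < K)%N.

Local Notation FF := (F R Z).
Local Notation feas := (feas Z).

Definition tightb (v : V -> R) (Y : {set V}) : bool :=
  (Y != set0) && (rsum v Y == FF Y).
Definition QKv (v : V -> R) : Prop := forall k, inQK K (v k).

Lemma sum_ind (a : V) (f : V -> R) : \sum_k (k == a)%:R * f k = f a.
Proof.
rewrite (bigD1 a) //= eqxx mul1r big1 ?addr0 // => k /negbTE ->.
by rewrite mul0r.
Qed.

Lemma rsum_setT (r : V -> R) : rsum r [set: V] = \sum_k r k.
Proof. by rewrite /rsum; apply: eq_bigl => k; rewrite inE. Qed.

Lemma rsum_disj (r : V -> R) (A B : {set V}) :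
  A :&: B = set0 -> rsum r (A :|: B) = rsum r A + rsum r B.
Proof. by move=> h; rewrite -rsum_mod h rsum0 addr0. Qed.

Lemma rsum_UD (r : V -> R) (A B : {set V}) :
  rsum r (A :|: B) = rsum r (A :\: B) + rsum r B.
Proof.
rewrite !rsumE -!big_split /=; apply: eq_bigr => k _; rewrite !inE.
by case: (k \in A); case: (k \in B); rewrite /= ?mul1r ?mul0r ?addr0 ?add0r.
Qed.

Lemma rsum_shift (v : V -> R) z a b (Y : {set V}) :
  rsum (shift v K z a b) Y =
  rsum v Y + z%:R / K%:R * ((a \in Y)%:R - (b \in Y)%:R).
Proof.
rewrite !rsumE -(sum_ind a (fun k => (k \in Y)%:R)) -(sum_ind b (fun k => (k \in Y)%:R)).
rewrite -sumrB mulr_sumr -big_split /=; apply: eq_bigr => k _.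
rewrite /shift; ring.
Qed.

Lemma QK_rsum (v : V -> R) (Y : {set V}) : QKv v -> inQK K (rsum v Y).
Proof. by move=> h; apply: QKsum. Qed.

Lemma QK_slack (v : V -> R) (Y : {set V}) :
  feas v -> QKv v -> inQK K (FF Y - rsum v Y).
Proof.
move=> [hs _] hq; rewrite /F -hs.
apply: QKB => //; last exact: QK_rsum.
apply: QKD => //; last exact: QKn.
by apply: QKB => //; [exact: QK_rsum | exact: QKn].
Qed.

Lemma tightT (v : V -> R) (k : V) : feas v -> tightb v [set: V].
Proof.
move=> [hs _]; apply/andP; split.
  by apply/set0Pn; exists k; rewrite inE.
by rewrite hs /F; apply/eqP; ring.
Qed.

Lemma tight_UI (v : V -> R) (A B : {set V}) :
  feas v -> tightb v A -> tightb v B -> A :&: B != set0 ->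
  tightb v (A :|: B) && tightb v (A :&: B).
Proof.
move=> [_ hf] /andP [hA0 /eqP hA] /andP [hB0 /eqP hB] hI.
have hU0 : A :|: B != set0.
  by apply: contraNneq hA0 => h; rewrite -subset0 -h subsetUl.
have h1 := hf _ hU0; have h2 := hf _ hI.
have h3 := F_sub R Z A B; have h4 := rsum_mod v A B.
rewrite /tightb hU0 hI /=; apply/andP; split; apply/eqP; lra.
Qed.

Lemma shift_feas (v : V -> R) a b :
  feas v -> QKv v -> a != b ->
  (forall Y, tightb v Y -> a \in Y -> b \in Y) -> feas (shift v K 1 a b).
Proof.
move=> hv hq hab ht; have [hs hf] := hv.
have hK := K_gt0 R Kpos.
split.
  by rewrite rsum_shift !inE hs /=; ring.
move=> Y hY; rewrite rsum_shift; have := hf _ hY.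
case ha: (a \in Y); case hb: (b \in Y); rewrite /=.
- by move=> h; rewrite subrr mulr0 addr0.
- move=> h.
  have hnt : rsum v Y != FF Y.
    apply: contraFneq hb => he; apply: ht => //; by rewrite /tightb hY he eqxx.
  have hlt : 0 < FF Y - rsum v Y by rewrite subr_gt0 lt_neqAle hnt h.
  have := QKlb Kpos (QK_slack Y hv hq) hlt.
  have -> : (1%:R : R) = 1 by [].
  lra.
- move=> h; have : 0 <= 1%:R / K%:R :> R by rewrite divr_ge0 ?ler0n.
  lra.
- by move=> h; rewrite subrr mulr0 addr0.
Qed.

Lemma minset (P : pred {set V}) :
  (exists Y, P Y) -> exists Y, P Y /\ forall Y', P Y' -> (#|Y| <= #|Y'|)%N.
Proof.
move=> [Y0 h0].
have ex : exists n, [exists Y, P Y && (#|Y| == n)].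
  by exists #|Y0|; apply/existsP; exists Y0; rewrite h0 eqxx.
case: (ex_minnP ex) => n /existsP [Y /andP [hP /eqP hc]] hmin.
exists Y; split => // Y' hP'; rewrite hc; apply: hmin.
by apply/existsP; exists Y'; rewrite hP' eqxx.
Qed.

Lemma maxset (P : pred {set V}) :
  (exists Y, P Y) -> exists Y, P Y /\ forall Y', P Y' -> (#|Y'| <= #|Y|)%N.
Proof.
move=> [Y0 h0].
have [Yc [hP hm]] := @minset (fun Y => P (~: Y)) (ex_intro _ (~: Y0) (etrans (congr1 P (setCK Y0)) h0)).
exists (~: Yc); split => // Y' hY'.
have := hm (~: Y'); rewrite setCK => /(_ hY').
have := cardsC Yc; have := cardsC Y'; lia.
Qed.

Lemma exchange (x y : V -> R) (i : V) :
  feas x -> feas y -> QKv x -> QKv y -> y i < x i ->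
  exists j, [/\ x j < y j,
    (forall Y, tightb y Y -> i \in Y -> j \in Y) &
    (forall Y, tightb x Y -> j \in Y -> i \in Y)].
Proof.
move=> hx hy hqx hqy hi.
have [D [/andP [hDt hDi] hDm]] :=
  @minset (fun Y => tightb y Y && (i \in Y))
    (ex_intro _ [set: V] (introT andP (conj (tightT i hy) (in_setT i)))).
have Dsub : forall Y, tightb y Y -> i \in Y -> D \subset Y.
  move=> Y hY hiY.
  have hI : D :&: Y != set0 by apply/set0Pn; exists i; rewrite inE hDi hiY.
  have /andP [_ hIt] := tight_UI hy hDt hY hI.
  have hc := hDm (D :&: Y); rewrite hIt inE hDi hiY /= in hc.
  have /eqP hE : D :&: Y == D by rewrite eqEcard subsetIl hc // .
  by rewrite -hE subsetIr.
pose goodb j := [forall Y, tightb x Y ==> (j \in Y) ==> (i \in Y)].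
case: (boolP [exists j, (j \in D) && (x j < y j) && goodb j]).
  move=> /existsP [j /andP [/andP [hjD hj] hg]]; exists j; split => //.
    by move=> Y hY hiY; apply: (subsetP (Dsub Y hY hiY)).
  by move=> Y hY hjY; move/forallP: hg => /(_ Y); rewrite hY hjY.
rewrite negb_exists => /forallP hbad.
pose J := [set k | (k \in D) && (x k < y k)].
pose maxT M := [&& tightb x M, i \notin M &
  [forall Y, (tightb x Y && (i \notin Y) && (Y :&: M != set0)) ==> (Y \subset M)]].
have getL : forall j, j \in J -> exists L, maxT L /\ j \in L.
  move=> j; rewrite inE => hjJ.
  have := hbad j; rewrite hjJ /= negb_forall => /existsP [Y0].
  rewrite negb_imply => /andP [hY0 ]; rewrite negb_imply => /andP [hjY0 hiY0].
  have [L [/andP [/andP [hLt hjL] hiL] hLm]] :=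
    @maxset (fun Y => tightb x Y && (j \in Y) && (i \notin Y))
      (ex_intro _ Y0 (introT andP (conj (introT andP (conj hY0 hjY0)) hiY0))).
  exists L; split => //; rewrite /maxT hLt hiL /=; apply/forallP => Y.
  apply/implyP => /andP [/andP [hYt hiY] hYL].
  have /andP [hUt _] := tight_UI hx hYt hLt hYL.
  have hc := hLm (Y :|: L); rewrite hUt !inE hjL orbT negb_or hiY hiL /= in hc.
  have /eqP hE : L == Y :|: L by rewrite eqEcard subsetUr hc.
  by rewrite hE subsetUl.
pose Inv (U : {set V}) := [/\ i \notin U,
  (forall M, maxT M -> M :&: U != set0 -> M \subset U) &
  FF (D :|: U) <= rsum y D + rsum x U - rsum y (D :&: U)].
have claim : forall s : seq V, (forall k, k \in s -> k \in J) ->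
    exists U, Inv U /\ (forall k, k \in s -> k \in U).
  elim => [|j s IH] hs.
    exists set0; split => //; split.
    - by rewrite inE.
    - by move=> M _; rewrite setI0 eqxx.
    - move/andP: hDt => [_ /eqP hDt].
      by rewrite setU0 setI0 !rsum0 -hDt subr0 addr0.
  have [U [[hiU hMU hF] hcov]] : exists U, Inv U /\ (forall k, k \in s -> k \in U).
    by apply: IH => k hk; apply: hs; rewrite inE hk orbT.
  have hjJ : j \in J by apply: hs; rewrite inE eqxx.
  have [L [hL hjL]] := getL j hjJ.
  case: (boolP (L :&: U == set0)) => hLU; last first.
    exists U; split => //.
    move=> k; rewrite inE => /orP [/eqP -> | hk]; last exact: hcov.
    by apply: (subsetP (hMU L hL hLU)).
  move/eqP: hLU => hLU.
  have hUL : U :&: L = set0 by rewrite setIC.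
  move: (hL) => /and3P [hLt hiL hLm].
  exists (U :|: L); split; last first.
    move=> k; rewrite inE => /orP [/eqP -> | hk]; rewrite inE ?hjL ?orbT //.
    by rewrite hcov.
  split.
  - by rewrite inE negb_or hiU hiL.
  - move=> M hM; rewrite setIUr.
    case: (boolP (M :&: U == set0)) => hMU0.
      rewrite (eqP hMU0) set0U => hML.
      move: (hM) => /and3P [hMt hiM _].
      have := forallP hLm M; rewrite hMt hiM hML /= => hsub.
      by apply: (subset_trans hsub); rewrite subsetUr.
    move=> _; apply: (subset_trans (hMU M hM hMU0)); exact: subsetUl.
  - have hjD : j \in D by move: hjJ; rewrite inE => /andP [].
    have hDL : D :&: L != set0 by apply/set0Pn; exists j; rewrite inE hjD hjL.
    have h1 := F_sub R Z (D :|: U) L.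
    have e1 : (D :|: U) :&: L = D :&: L by rewrite setIUl hUL setU0.
    rewrite e1 -setUA in h1.
    have h2 := (hy.2 _ hDL).
    move/andP: hLt => [_ /eqP hLx].
    have e2 := rsum_disj x hUL.
    have e3 : rsum y (D :&: (U :|: L)) = rsum y (D :&: U) + rsum y (D :&: L).
      rewrite setIUr; apply: rsum_disj.
      by rewrite setIACA setIid hUL setI0.
    rewrite e2 e3; lra.
have [U [[hiU _ hF] hcov]] : exists U, Inv U /\ (forall k, k \in enum J -> k \in U).
  by apply: claim => k; rewrite mem_enum.
have hcovJ : forall k, k \in J -> k \in U by move=> k hk; apply: hcov; rewrite mem_enum.
exfalso.
have hDU0 : D :|: U != set0 by apply/set0Pn; exists i; rewrite inE hDi.
have h1 := hx.2 _ hDU0.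
have e1 := rsum_UD x D U.
have e2 := rsum_D y D U.
have hle : rsum x (D :\: U) <= rsum y (D :\: U) by lra.
have hiDU : i \in D :\: U by rewrite inE hiU hDi.
have : x i - y i <= rsum x (D :\: U) - rsum y (D :\: U).
  rewrite /rsum -sumrB (bigD1 i) //= lerDl; apply: sumr_ge0 => k /andP [hk _].
  rewrite subr_ge0; move: hk; rewrite inE => /andP [hkU hkD].
  rewrite leNgt; apply: contra hkU => hlt; apply: hcovJ; by rewrite inE hkD hlt.
lra.
Qed.

End Tight.

Section Main.
Variables (R : realType) (V Pk : finType) (Z : V -> {set Pk}) (K : nat).
Hypothesis Kpos : (0 < K)%N.
Variables (w rs : V -> R).
Hypothesis wpos : forall k, 0 < w k.

Lemma gfun_shift (v : V -> R) z a b : a != b ->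
  gfun w (shift v K z a b) = gfun w v
   + ((v a + z%:R / K%:R) ^+ 2 - v a ^+ 2) / w a
   + ((v b - z%:R / K%:R) ^+ 2 - v b ^+ 2) / w b.
Proof.
move=> hab.
have hba : b != a by rewrite eq_sym.
rewrite /gfun (bigD1 a) //= [in RHS](bigD1 a) //= (bigD1 b) /=; last by rewrite hba.
rewrite [in RHS](bigD1 b) /=; last by rewrite hba.
have -> : \sum_(i | (i != a) && (i != b)) shift v K z a b i ^+ 2 / w i =
          \sum_(i | (i != a) && (i != b)) v i ^+ 2 / w i.
  apply: eq_bigr => k /andP [hka hkb].
  by rewrite /shift (negbTE hka) (negbTE hkb) subrr mulr0 addr0.
rewrite /shift !eqxx (negbTE hab) (negbTE hba) /=; ring.
Qed.

Definition dist (r : V -> R) := \sum_k `|r k - rs k|.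

Lemma dist_ge0 r : 0 <= dist r.
Proof. by apply: sumr_ge0 => k _; exact: normr_ge0. Qed.

Lemma dist_shift (r : V -> R) i j : i != j ->
  1 / K%:R <= r i - rs i -> 1 / K%:R <= rs j - r j ->
  dist (shift r K 1 j i) = dist r - 2 / K%:R.
Proof.
move=> hij hi hj.
have hji : j != i by rewrite eq_sym.
have hK := K_gt0 R Kpos.
have hd : 0 <= 1 / K%:R :> R by rewrite divr_ge0 ?ler0n.
rewrite /dist (bigD1 i) //= [in RHS](bigD1 i) //= (bigD1 j) /=; last by rewrite hji.
rewrite [in RHS](bigD1 j) /=; last by rewrite hji.
have -> : \sum_(k | (k != i) && (k != j)) `|shift r K 1 j i k - rs k| =
          \sum_(k | (k != i) && (k != j)) `|r k - rs k|.
  apply: eq_bigr => k /andP [hki hkj].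
  by rewrite /shift (negbTE hki) (negbTE hkj) subrr mulr0 addr0.
rewrite /shift !eqxx (negbTE hij) (negbTE hji) /=.
have -> : (1%:R : R) = 1 by [].
rewrite (ger0_norm (x := r i - rs i)); last lra.
rewrite (ler0_norm (x := r j - rs j)); last lra.
rewrite ger0_norm; last lra.
rewrite ler0_norm; last lra.
have -> : 2 / K%:R = 1 / K%:R + 1 / K%:R :> R by rewrite -mulrDl.
lra.
Qed.

Lemma eq_case (r : V -> R) : feas Z r -> feas Z rs ->
  ~~ [exists i, rs i < r i] -> gfun w rs <= gfun w r.
Proof.
move=> hr hrs; rewrite negb_exists => /forallP hle.
have hle' : forall k, r k <= rs k by move=> k; have := hle k; rewrite -leNgt.
have hsum : \sum_k (rs k - r k) = 0.
  by rewrite sumrB -!rsum_setT hr.1 hrs.1 subrr.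
have heq : forall k, rs k = r k.
  move=> k.
  have hpos : forall k', xpredT k' -> 0 <= rs k' - r k' by move=> k' _; rewrite subr_ge0.
  have := psumr_eq0P hpos hsum (i := k) isT.
  by move/eqP; rewrite subr_eq0 => /eqP.
by rewrite /gfun le_eqVlt; apply/orP; left; apply/eqP; apply: eq_bigr => k _; rewrite heq.
Qed.

Lemma step_lemma (r : V -> R) (i : V) :
  feas Z rs -> QKv K rs ->
  (forall i j, feas Z (shift rs K 1 i j) -> gfun w rs <= gfun w (shift rs K 1 i j)) ->
  feas Z r -> QKv K r -> rs i < r i ->
  exists r', [/\ feas Z r', QKv K r', gfun w r' <= gfun w r &
                 dist r' = dist r - 2 / K%:R].
Proof.
move=> hrs hqs hloc hr hq hi.
have hK := K_gt0 R Kpos.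
have [j [hj hyt hxt]] := exchange Kpos hr hrs hq hqs hi.
have hij : i != j by apply/eqP => e; subst j; lra.
have hji : j != i by rewrite eq_sym.
have hf1 := shift_feas Kpos hrs hqs hij hyt.
have hf2 := shift_feas Kpos hr hq hji hxt.
have hq2 : QKv K (shift r K 1 j i).
  by move=> k; rewrite /shift; apply: QKD => //; apply: QKlin.
have gi : 1 / K%:R <= r i - rs i by apply: QKlb => //; [apply: QKB | lra].
have gj : 1 / K%:R <= rs j - r j by apply: QKlb => //; [apply: QKB | lra].
have hds := dist_shift hij gi gj.
exists (shift r K 1 j i); split => //.
have := hloc i j hf1; rewrite !gfun_shift //.
have -> : (1%:R : R) = 1 by [].
set d := 1 / K%:R in gi gj *.
have hwi := wpos i; have hwj := wpos j.
set a := w i; set b := w j.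
have ha : 0 < a^-1 by rewrite invr_gt0.
have hb : 0 < b^-1 by rewrite invr_gt0.
have hd : 0 <= d by rewrite /d divr_ge0 ?ler0n.
have p1 : 0 <= d * a^-1 * (r i - rs i - d).
  apply: mulr_ge0; [apply: mulr_ge0 => //; exact: ltW | lra].
have p2 : 0 <= d * b^-1 * (rs j - r j - d).
  apply: mulr_ge0; [apply: mulr_ge0 => //; exact: ltW | lra].
have E : ((r j + d) ^+ 2 - r j ^+ 2) / b + ((r i - d) ^+ 2 - r i ^+ 2) / a =
     - (((rs i + d) ^+ 2 - rs i ^+ 2) / a + ((rs j - d) ^+ 2 - rs j ^+ 2) / b)
     - 2 * (d * a^-1 * (r i - rs i - d)) - 2 * (d * b^-1 * (rs j - r j - d)).
  by rewrite /a /b; ring.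
lra.
Qed.

Lemma main_ind :
  feas Z rs -> QKv K rs ->
  (forall i j, feas Z (shift rs K 1 i j) -> gfun w rs <= gfun w (shift rs K 1 i j)) ->
  forall n (r : V -> R), feas Z r -> QKv K r -> dist r <= n%:R / K%:R ->
  gfun w rs <= gfun w r.
Proof.
move=> hrs hqs hloc.
have hK := K_gt0 R Kpos.
have h2 : 0 < 2 / K%:R :> R by rewrite divr_gt0 ?ltr0n.
elim => [|n IH] r hr hq hdist.
  case: (boolP [exists i, rs i < r i]); last exact: eq_case.
  move=> /existsP [i hi].
  have [r' [_ _ _ hds]] := step_lemma hrs hqs hloc hr hq hi.
  have := dist_ge0 r'; rewrite hds.
  move: hdist; rewrite mul0r => hdist.
  lra.
case: (boolP [exists i, rs i < r i]); last exact: eq_case.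
move=> /existsP [i hi].
have [r' [hr' hq' hg hds]] := step_lemma hrs hqs hloc hr hq hi.
apply: (le_trans _ hg); apply: IH => //.
rewrite hds; move: hdist.
have -> : 2 / K%:R = 1 / K%:R + 1 / K%:R :> R by rewrite -mulrDl.
rewrite -natr1 mulrDl; lra.
Qed.
End Main.

Theorem lemma2 (R : realType) (V Pk : finType) (Z : V -> {set Pk})
    (w : V -> R) (Ps : {set {set V}}) (rs : V -> R) :
  (1 < #|V|)%N ->
  (forall i, 0 < w i) ->
  @fundamental_partition R V Pk Z Ps ->
  (2 <= #|Ps|)%N ->
  core Z rs -> (forall i, inQK (#|Ps| - 1) (rs i)) ->
  ((forall r : V -> R, core Z r -> (forall i, inQK (#|Ps| - 1) (r i)) ->
      gfun w rs <= gfun w r)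
   <->
   (forall (i j : V) (zeta : nat), (0 < zeta)%N ->
      core Z (shift rs (#|Ps| - 1) zeta i j) ->
      gfun w rs <= gfun w (shift rs (#|Ps| - 1) zeta i j))).
Proof.
move=> _ hw _ hPs hc hq.
have Kpos : (0 < #|Ps| - 1)%N by rewrite subn_gt0.
split.
  move=> hmin i j z hz hcs; apply: hmin => // k.
  by rewrite /shift; apply: QKD => //; apply: QKlin.
move=> hloc r hr hqr.
have hc' := (core_feas Z rs).1 hc.
have hr' := (core_feas Z r).1 hr.
have hloc' : forall i j, feas Z (shift rs (#|Ps| - 1) 1 i j) ->
    gfun w rs <= gfun w (shift rs (#|Ps| - 1) 1 i j).
  by move=> i j hf; apply: hloc => //; apply/core_feas.
have hK := K_gt0 R Kpos.
have hd0 := dist_ge0 rs r.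
pose n := Num.Def.archi_bound (dist rs r * (#|Ps| - 1)%:R).
apply: (main_ind Kpos hw hc' hq hloc' (n := n) hr' hqr).
rewrite ler_pdivlMr //; apply: ltW; apply: archi_boundP.
by apply: mulr_ge0 => //; apply: ltW.
Qed.
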